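(* Let $\Gamma=(G,\sigma)$, $G=(V,E)$, be a signed graph and $f:V\to\mathbb R$ a function not identically zero, with weak nodal domains $D_1,\dots,D_q$. Let $G_D$ be the graph with vertex set $\{D_1,\dots,D_q\}$ and edges $\{D_i,D_j\}$ whenever $D_i\sim D_j$, i.e. there exist $x\in D_i$ and $y\in D_j$ with $x\sim y$. If $G$ is connected, then $G_D$ is connected.
   Context: A signed graph is a finite simple undirected graph $G=(V,E)$ with $\sigma:E\to\{+1,-1\}$. A walk is $y_1,\dots,y_m$ ($m\ge2$) with consecutive vertices adjacent. For $f:V\to\mathbb R$, a W-walk of $f$ is a walk such that for any two consecutive nonzeros $y_i,y_j$ along it ($i<j$, $f(y_i)\ne0\ne f(y_j)$, $f(y_l)=0$ for $i<l<j$) one has $f(y_i)\sigma_{y_iy_{i+1}}\cdots\sigma_{y_{j-1}y_j}f(y_j)>0$. On $\Omega=\{x:f(x)\ne0\}$ the relation ''$x=y$ or a W-walk connects $x$ and $y$'' is an equivalence relation with classes $W_1,\dots,W_q$; the weak nodal domains of $f$ are the induced subgraphs on $W_i^0=W_i\cup\{x\in V:\text{there is a W-walk from } x \text{ to some vertex of } W_i\}$. *)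

(* Defs.v *)
From mathcomp Require Import all_boot all_order all_algebra.
From Stdlib Require Relation_Operators.
Set Implicit Arguments. Unset Strict Implicit. Unset Printing Implicit Defensive.
Import Order.TTheory GRing.Theory Num.Theory.
Local Open Scope ring_scope.

Definition signed_graph (T : finType) (R : realFieldType)
  (adj : rel T) (sigma : T -> T -> R) : Prop :=
  symmetric adj /\ irreflexive adj /\
  (forall x y, adj x y -> sigma x y = sigma y x) /\
  (forall x y, adj x y -> sigma x y = 1 \/ sigma x y = -1).

Section WalkDefs.
Variables (T : finType) (R : realFieldType) (adj : rel T) (sigma : T -> T -> R)
  (f : T -> R).

(* The walk y_1, ..., y_m (m >= 2) is represented as x :: p with p nonempty. *)
Definition is_walk (x : T) (p : seq T) : bool := (p != [::]) && path adj x p.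

Definition W_cond (x : T) (p : seq T) : Prop :=
  let s := x :: p in
  forall i j, (i < j)%N -> (j < size s)%N ->
    f (nth x s i) != 0 -> f (nth x s j) != 0 ->
    (forall l, (i < l)%N -> (l < j)%N -> f (nth x s l) = 0) ->
    0 < f (nth x s i) * (\prod_(i <= l < j) sigma (nth x s l) (nth x s l.+1))
          * f (nth x s j).

Definition Wwalk (x y : T) : Prop :=
  exists p : seq T, [/\ is_walk x p, W_cond x p & last x p = y].

(* The class W(w) of w in Omega = {f <> 0} w.r.t. the relation
   "x = y or a W-walk connects x and y". *)
Definition Wclass (w x : T) : Prop := f x != 0 /\ (w = x \/ Wwalk w x).

Definition nodal_domain (w x : T) : Prop :=
  Wclass w x \/ exists y, Wclass w y /\ Wwalk x y.

Definition domain_adj (w w' : T) : Prop :=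
  f w != 0 /\ f w' != 0 /\
  exists x y, [/\ nodal_domain w x, nodal_domain w' y & adj x y].

End WalkDefs.

(* Main.v *)
Require Import Defs.
From mathcomp Require Import all_boot all_order all_algebra.
From Stdlib Require Relation_Operators.
Import Order.TTheory GRing.Theory Num.Theory.
Local Open Scope ring_scope.

Section Aux.
Variables (T : finType) (R : realFieldType) (adj : rel T) (sigma : T -> T -> R) (f : T -> R).

Lemma zero_walk {p : seq T} {x : T} : path adj x p -> f x = 0 -> f (last x p) != 0 ->
  exists q, [/\ is_walk adj x q, (forall i, (i < size q)%N -> f (nth x (x :: q) i) = 0)
     & f (last x q) != 0].
Proof.
elim: p x => [|y p IH] x /=.
  by move=> _ ->; rewrite eqxx.
case/andP=> axy hp fx0 hl.
have [fy|fy] := eqVneq (f y) 0.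
  have [q [wq zq lq]] := IH y hp fy hl.
  exists (y :: q); split => //.
    by move: wq; rewrite /is_walk /= axy => /andP[_ ->].
  case=> [|i] //= hi.
  rewrite (set_nth_default y) /=; last by rewrite ltnS ltnW.
  exact: zq.
exists [:: y]; split => //.
  by rewrite /is_walk /= axy.
by case.
Qed.

Lemma rep_ex (v : T) : (exists x, f x != 0) -> (forall x y : T, connect adj x y) ->
  exists r, [/\ f r != 0, nodal_domain adj sigma f r v & (f v != 0 -> r = v)].
Proof.
move=> [y0 hy0] hc.
have [fv|fv] := eqVneq (f v) 0; last first.
  by exists v; split => //; left; split => //; left.
have /connectP [p hp ly] := hc v y0.
rewrite ly in hy0.
have [q [wq zq lq]] := zero_walk hp fv hy0.
exists (last v q); split => //.
right; exists (last v q); split; first by split => //; left.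
exists q; split => //.
move=> i j ij js hi _ _.
exfalso; move: hi; rewrite zq ?eqxx //.
by apply: (leq_trans ij); rewrite -ltnS.
Qed.
End Aux.

Theorem proposition3p7 (T : finType) (R : realFieldType)
  (adj : rel T) (sigma : T -> T -> R) (f : T -> R) :
  signed_graph adj sigma ->
  (exists x, f x != 0) ->
  (forall x y : T, connect adj x y) ->
  forall w w' : T, f w != 0 -> f w' != 0 ->
    Relation_Operators.clos_refl_trans T (domain_adj adj sigma f) w w'.
Proof.
move=> _ hex hc w w' hw hw'.
have key : forall p x rx, f rx != 0 -> nodal_domain adj sigma f rx x ->
  (f x != 0 -> rx = x) -> path adj x p ->
  exists ry, [/\ f ry != 0, (f (last x p) != 0 -> ry = last x p) &
     Relation_Operators.clos_refl_trans T (domain_adj adj sigma f) rx ry].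
  elim=> [|y p IH] x rx frx ndx ex /=.
    by move=> _; exists rx; split => //; apply: Relation_Operators.rt_refl.
  case/andP=> axy hp.
  have [ry [fry ndy ey]] := @rep_ex T R adj sigma f y hex hc.
  have [rz [frz ez cz]] := IH y ry fry ndy ey hp.
  exists rz; split => //.
  apply: Relation_Operators.rt_trans cz.
  apply: Relation_Operators.rt_step.
  by split => //; split => //; exists x, y.
have /connectP [p hp ew'] := hc w w'; subst w'.
have ndw : nodal_domain adj sigma f w w by left; split => //; left.
have [ry [fry ey cr]] := key p w w hw ndw (fun _ => erefl) hp.
by rewrite -(ey hw').
Qed.
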